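(* Let $k$ be a perfect field of characteristic $p>0$, $P$ a finite poset, $R=\mathcal{R}_k[J(P)]$ the Hibi ring and $\mathfrak{m}=R_+$. Then \[ \operatorname{fpt}(\mathfrak{m})\le\min\{\operatorname{len}C\mid C\text{ a maximal chain in }\overline{P}\}=\min\{\operatorname{len}C\mid C\text{ a maximal chain in }P\}+2 . \]
   Context: $J(P)$ is the set of poset ideals of $P=\{p_1,\dots,p_N\}$ (down-closed subsets, including $\emptyset$ and $P$). The Hibi ring is $\mathcal{R}_k[J(P)]=k[\,T\prod_{p_i\in I}X_i\mid I\in J(P)\,]\subseteq k[T,X_1,\dots,X_N]$, each generator in degree $1$; $\mathfrak{m}=R_+$ is generated by these generators. $\overline{P}=P\cup\{-\infty,\infty\}$ with $-\infty<x<\infty$ for all $x\in P$. The length of a chain $C$ is $\#C-1$. For a real $t\ge0$, the pair $(R,\mathfrak{m}^t)$ is $F$-pure if for all large $q=p^e$ there is $d\in\mathfrak{m}^{\lceil t(q-1)\rceil}$ such that the $R$-linear map $R\to R^{1/q}$, $1\mapsto d^{1/q}$, splits; $\operatorname{fpt}(\mathfrak{m})=\sup\{t\ge0\mid(R,\mathfrak{m}^t)\text{ is }F\text{-pure}\}$. *)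

(* Defs.v *)
From HB Require Import structures.
From mathcomp Require Import all_boot all_order all_algebra.
From mathcomp Require Import mpoly.
From mathcomp Require Import classical_sets reals ereal.
Set Implicit Arguments. Unset Strict Implicit. Unset Printing Implicit Defensive.
Import Order.TTheory GRing.Theory Num.Theory.
Local Open Scope ring_scope.

(* variable 0 is T, variable (lift ord0 i) is X_(i+1) for i : 'I_N.          *)
Notation polyR k N := (mpoly.mpoly N.+1 k).

Definition varT (k : fieldType) (N : nat) : polyR k N :=
  mpoly.mpolyX k (mpoly.mnm1 (@ord0 N)).
Definition varX (k : fieldType) (N : nat) (i : 'I_N) : polyR k N :=
  mpoly.mpolyX k (mpoly.mnm1 (lift ord0 i)).

Definition is_partial_order (N : nat) (le : rel 'I_N) : Prop :=
  [/\ reflexive le, antisymmetric le & transitive le].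

Definition poset_ideal (N : nat) (le : rel 'I_N) (I : {set 'I_N}) : Prop :=
  forall x y : 'I_N, le x y -> y \in I -> x \in I.

Definition hibi_gen (k : fieldType) (N : nat) (le : rel 'I_N) (g : polyR k N) : Prop :=
  exists I : {set 'I_N}, poset_ideal le I /\ g = varT k N * \prod_(i in I) varX k i.

Inductive in_kalg (k : fieldType) (N : nat) (G : polyR k N -> Prop) : polyR k N -> Prop :=
  | kalg_const (c : k) : in_kalg G (mpoly.mpolyC N.+1 c)
  | kalg_gen g : G g -> in_kalg G g
  | kalg_add x y : in_kalg G x -> in_kalg G y -> in_kalg G (x + y)
  | kalg_mul x y : in_kalg G x -> in_kalg G y -> in_kalg G (x * y).

Definition hibi_ring (k : fieldType) (N : nat) (le : rel 'I_N) : polyR k N -> Prop :=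
  in_kalg (hibi_gen le).

Inductive ideal_gen (k : fieldType) (N : nat) (R G : polyR k N -> Prop) : polyR k N -> Prop :=
  | igen_zero : ideal_gen R G 0
  | igen_gen g : G g -> ideal_gen R G g
  | igen_add x y : ideal_gen R G x -> ideal_gen R G y -> ideal_gen R G (x + y)
  | igen_mul r x : R r -> ideal_gen R G x -> ideal_gen R G (r * x).

Definition hibi_max (k : fieldType) (N : nat) (le : rel 'I_N) : polyR k N -> Prop :=
  ideal_gen (hibi_ring le) (hibi_gen le).

Fixpoint ideal_pow (k : fieldType) (N : nat) (R I : polyR k N -> Prop) (n : nat)
  : polyR k N -> Prop :=
  match n with
  | 0 => R
  | n'.+1 => ideal_gen R (fun z => exists a b, ideal_pow R I n' a /\ I b /\ z = a * b)
  end.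

(* The R-linear map R -> R^{1/q}, 1 |-> d^{1/q}, splits.  Identifying R^{1/q}
   with R (x^{1/q} <-> x), the R-module structure on R^{1/q} becomes
   r . x = r^q x, the map becomes r |-> r^q d, and a splitting is an additive
   map phi : R -> R with phi (r^q x) = r phi x and phi (r^q d) = r. *)
Definition splits_at (k : fieldType) (N : nat) (R : polyR k N -> Prop) (q : nat)
  (d : polyR k N) : Prop :=
  exists phi : polyR k N -> polyR k N,
    [/\ forall x, R x -> R (phi x),
        forall x y, R x -> R y -> phi (x + y) = phi x + phi y,
        forall r x, R r -> R x -> phi (r ^+ q * x) = r * phi x
      & forall r, R r -> phi (r ^+ q * d) = r].

Definition Fpure_pair (k : fieldType) (N : nat) (R I : polyR k N -> Prop) (p : nat)
  (rT : realType) (t : rT) : Prop :=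
  exists e0 : nat, forall e : nat, (e0 <= e)%N ->
    let q := (p ^ e)%N in
    exists d, ideal_pow R I `|Num.ceil (t * (q%:R - 1))|%N d /\ splits_at R q d.

Definition fpt (k : fieldType) (N : nat) (R I : polyR k N -> Prop) (p : nat)
  (rT : realType) : \bar rT :=
  ereal_sup [set (t%:E)%E | t in [set t : rT | 0 <= t /\ Fpure_pair R I p t]].

Definition is_chain (T : finType) (r : rel T) (C : {set T}) : bool :=
  [forall x in C, forall y in C, r x y || r y x].

Definition is_maximal_chain (T : finType) (r : rel T) (C : {set T}) : bool :=
  is_chain r C && [forall D : {set T}, (is_chain r D && (C \subset D)) ==> (D == C)].

Definition chain_len (T : finType) (C : {set T}) : int := (#|C|%:Z - 1)%R.

(* minimal length of a maximal chain (a maximal chain always exists in a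
   finite poset, and #|C| <= #|T|, so the default #|T| is never strictly below
   the true minimum) *)
Definition min_maxchain_len (T : finType) (r : rel T) : int :=
  ((\big[minn/#|T|]_(C : {set T} | is_maximal_chain r C) #|C|)%:Z - 1)%R.

(* inl i = p_i, inr false = -oo, inr true = +oo *)
Definition Pbar (N : nat) : finType := ('I_N + bool)%type.

Definition le_bar (N : nat) (le : rel 'I_N) : rel (Pbar N) :=
  fun x y =>
    match x, y with
    | inl i, inl j => le i j
    | inr false, _ => true
    | _, inr true => true
    | _, _ => false
    end.

Definition perfect_field (k : fieldType) (p : nat) : Prop :=
  forall x : k, exists y : k, y ^+ p = x.

(* Main.v *)
Require Import Defs.
From HB Require Import structures.
From mathcomp Require Import all_boot all_order all_algebra.
From mathcomp Require Import mpoly.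
From mathcomp Require Import zify.
Import GRing.Theory.
Set Implicit Arguments. Unset Strict Implicit. Unset Printing Implicit Defensive.

Section Bar.
Variables (N : nat) (le : rel 'I_N).
Hypothesis hpo : is_partial_order le.
Local Notation leb := (le_bar le).

Lemma leb_refl : reflexive leb.
Proof. case: hpo => r _ _; by case=> [i|[]] /=. Qed.

Lemma leb_trans : transitive leb.
Proof. case: hpo => _ _ t; move=> y x z; case: x => [i|[]]; case: y => [j|[]]; case: z => [l|[]] //=; exact: t. Qed.

Lemma leb_anti : antisymmetric leb.
Proof. case: hpo => _ a _; move=> x y; case: x => [i|[]]; case: y => [j|[]] //= H; by rewrite (a _ _ H). Qed.

Lemma leb_bot x : leb (inr false) x. Proof. by case: x => [i|[]]. Qed.
Lemma leb_top x : leb x (inr true). Proof. by case: x => [i|[]]. Qed.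
End Bar.


Section Chain.
Variables (T : finType) (r : rel T).
Hypotheses (rr : reflexive r) (rt : transitive r) (ra : antisymmetric r).

Definition coverP x s := [/\ r x s, x != s & forall z, r x z -> r z s -> z = x \/ z = s].

Lemma chainP (C : {set T}) : reflect (forall x y, x \in C -> y \in C -> r x y || r y x) (is_chain r C).
Proof.
apply: (iffP forallP) => [H x y xC yC|H x].
  by move/implyP: (H x) => /(_ xC) /forallP /(_ y) /implyP /(_ yC).
apply/implyP=> xC; apply/forallP=> y; apply/implyP=> yC; exact: H.
Qed.

Lemma maxchain_in (C : {set T}) x : is_maximal_chain r C -> (forall y, y \in C -> r x y || r y x) -> x \in C.
Proof.
case/andP=> /chainP hC /forallP /(_ (x |: C)) /implyP H hx.
have /eqP <- : x |: C == C.
  apply: H; rewrite subsetUr andbT; apply/chainP=> y z /setU1P [->|yC] /setU1P [->|zC].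
  - by rewrite rr.
  - exact: hx.
  - by rewrite orbC hx.
  - exact: hC.
by rewrite setU11.
Qed.

Lemma ex_maxchain : exists C, is_maximal_chain r C.
Proof.
have : is_chain r set0 by apply/chainP=> x y; rewrite inE.
move=> h0.
case: (@arg_maxnP _ set0 (is_chain r) (fun C => #|C|) h0) => C hC hmax.
exists C; rewrite /is_maximal_chain hC /=; apply/forallP=> D; apply/implyP=> /andP [hD sCD].
have le := hmax D hD; by rewrite eq_sym eqEcard sCD /=.
Qed.

Variables (bot top : T).
Hypotheses (hbot : forall x, r bot x) (htop : forall x, r x top).

Definition ltr x y := r x y && (x != y).

Lemma maxchain_bound (C : {set T}) (B : T -> nat) q :
  is_maximal_chain r C -> B top = 0 ->
  (forall x s, x \in C -> s \in C -> coverP x s -> B x < B s + q) ->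
  forall x, x \in C -> B x <= #|[set y in C | ltr x y]| * q.-1.
Proof.
move=> hC Btop hcov.
have topC : top \in C by apply: (maxchain_in hC) => y _; rewrite htop orbT.
move/andP: (hC) => [/chainP chC _].
suff H : forall k x, x \in C -> #|[set y in C | ltr x y]| = k -> B x <= k * q.-1.
  by move=> x xC; exact: (H _ x xC erefl).
elim=> [|k IH] x xC.
  move=> /eqP; rewrite cards_eq0 => /eqP h0.
  case: (eqVneq x top) => [->|ne]; first by rewrite Btop.
  have : top \in [set y in C | ltr x y] by rewrite inE topC /ltr htop ne.
  by rewrite h0 inE.
move=> hk.
set A := [set y in C | ltr x y].
have A0 : (0 < #|A|) by rewrite hk.
case/card_gt0P: A0 => y0 y0A.
case: (@arg_maxnP _ y0 (mem A) (fun y => #|[set z in C | ltr y z]|) y0A) => s sA smax.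
have sA2 : s \in A := sA.
move: (sA2); rewrite /A inE /ltr => /andP [sC /andP [xs nxs]].
have smin : forall y, y \in A -> r s y.
  move=> y yA; move: (yA); rewrite inE /ltr => /andP [yC /andP [xy nxy]].
  case/orP: (chC _ _ sC yC) => // ys.
  case: (eqVneq y s) => [->|nys]; first by rewrite rr.
  have : #|[set z in C | ltr s z]| < #|[set z in C | ltr y z]|.
    apply: proper_card; apply/properP; split.
      apply/subsetP=> z; rewrite !inE /ltr => /andP [zC /andP [sz nsz]]; rewrite zC /=.
      rewrite /ltr (rt ys sz) /=; apply/negP=> /eqP E; subst z.
      by move/negP: nsz; apply; apply/eqP; apply: ra; rewrite sz ys.
    exists s; first by rewrite inE sC /ltr ys nys.
    by rewrite inE /ltr rr eqxx /= andbF.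
  by move=> lt; move: (smax y yA) => /=; rewrite leqNgt lt.
have cov : coverP x s.
  split => // z xz zs.
  case: (eqVneq z x) => [->|nzx]; first by left.
  case: (eqVneq z s) => [->|nzs]; first by right.
  have zC : z \in C.
    apply: (maxchain_in hC) => y yC.
    case/orP: (chC _ _ xC yC) => [xy|yx]; last by rewrite (rt yx xz) orbT.
    case: (eqVneq x y) => [<-|nxy]; first by rewrite xz orbT.
    by rewrite (rt zs (smin y _)) // inE yC /ltr xy nxy.
  have : r s z by apply: smin; rewrite inE zC /ltr xz eq_sym nzx.
  move=> sz; by move/negP: nzs; case; apply/eqP; apply: ra; rewrite sz zs.
have As : A = s |: [set z in C | ltr s z].
  apply/setP=> z; rewrite !inE /ltr; apply/idP/idP.
  - move=> /andP [zC /andP [xz nxz]].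
    case: (eqVneq z s) => [->|nzs] //=; rewrite zC /=.
    rewrite /ltr (smin z) ?inE ?zC /ltr ?xz ?nxz //=; by rewrite eq_sym.
  - case/orP=> [/eqP ->|/andP [zC /andP [sz nsz]]].
      by rewrite sC /ltr xs.
    rewrite zC /ltr (rt xs sz) /=; apply/negP=> /eqP E; subst z.
    by move/negP: nxs; apply; apply/eqP; apply: ra; rewrite sz xs.
have cs : #|[set z in C | ltr s z]| = k.
  move: hk; rewrite -/A As cardsU1 inE /ltr rr eqxx andbF /= add1n; by case.
have := IH s sC cs.
have := hcov x s xC sC cov.
rewrite mulSn; lia.
Qed.

End Chain.

Section Chain2.
Variables (T : finType) (r : rel T).
Hypotheses (rr : reflexive r) (rt : transitive r) (ra : antisymmetric r).
Variables (bot top : T).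
Hypotheses (hbot : forall x, r bot x) (htop : forall x, r x top).

Lemma maxchain_bot_bound (C : {set T}) (B : T -> nat) q :
  is_maximal_chain r C -> B top = 0 ->
  (forall x s, x \in C -> s \in C -> coverP r x s -> B x < B s + q) ->
  B bot <= (#|C|).-1 * q.-1.
Proof.
move=> hC Bt hcov.
have botC : bot \in C by apply: (maxchain_in rr hC) => y _; rewrite hbot.
have := maxchain_bound rr rt ra htop hC Bt hcov botC.
suff -> : [set y in C | ltr r bot y] = C :\ bot by rewrite (cardsD1 bot C) botC.
apply/setP=> y; rewrite !inE /ltr hbot /= andbC eq_sym; done.
Qed.

Lemma bigmin_le_seq (I : eqType) (F : I -> nat) (P : pred I) d (s : seq I) C :
  C \in s -> P C -> \big[minn/d]_(D <- s | P D) F D <= F C.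
Proof.
elim: s => [//|a s IH]; rewrite inE big_cons => /orP [/eqP <- PC|Cs PC].
  by rewrite PC geq_minl.
case: (P a); last exact: IH.
exact: leq_trans (geq_minr _ _) (IH Cs PC).
Qed.

Lemma bigmin_le (F : {set T} -> nat) (P : pred {set T}) d C : P C ->
  \big[minn/d]_(D | P D) F D <= F C.
Proof. by move=> PC; apply: bigmin_le_seq => //; rewrite mem_index_enum. Qed.

Lemma bigmin_attained (F : {set T} -> nat) (P : pred {set T}) d C : P C ->
  (forall D, P D -> F D <= d) ->
  exists2 D, P D & \big[minn/d]_(D | P D) F D = F D.
Proof.
move=> PC Fd.
have : (\big[minn/d]_(D | P D) F D = d) \/ exists2 D, P D & \big[minn/d]_(D | P D) F D = F D.
  elim/big_rec: _ => [|D m PD [->|[D' PD' ->]]]; first by left.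
  - by right; exists D => //; apply/minn_idPl; exact: Fd.
  - case: (leqP (F D) (F D')) => h; first by right; exists D => //; apply/minn_idPl.
    by right; exists D' => //; apply/minn_idPr; exact: ltnW.
case=> // hd; exists C => //; apply/eqP; rewrite eqn_leq bigmin_le //= hd.
have := bigmin_le F d PC; rewrite hd => h; exact: leq_trans (Fd _ PC) _.
Qed.
End Chain2.


Section Corr.
Variables (N : nat) (le : rel 'I_N).
Hypothesis hpo : is_partial_order le.
Local Notation leb := (le_bar le).

Definition Cbar (C : {set 'I_N}) : {set Pbar N} :=
  [set x : Pbar N | if x is inl i then i \in C else true].
Definition Cun (D : {set Pbar N}) : {set 'I_N} := [set i | inl i \in D].

Lemma card_Cbar C : #|Cbar C| = (#|C| + 2)%N.
Proof.
have -> : Cbar C = inl @: C :|: [set inr false; inr true].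
  apply/setP=> x; rewrite !inE; case: x => [i|[]] /=.
  - by rewrite orbF mem_imset //; exact: inl_inj.
  - by rewrite eqxx orbT.
  - by rewrite orbT.
rewrite cardsU card_imset; last exact: inl_inj.
have -> : inl @: C :&: [set inr false; inr true] = set0.
  apply/setP=> x; rewrite !inE; case: x => [i|[]] /=.
  - by rewrite andbF.
  - apply/negP=> /andP [/imsetP [j _ //]].
  - apply/negP=> /andP [/imsetP [j _ //]].
by rewrite cards0 subn0 cards2.
Qed.

Lemma CunK C : Cun (Cbar C) = C.
Proof. by apply/setP=> i; rewrite !inE. Qed.

Lemma Cbar_chain C : is_chain le C -> is_chain leb (Cbar C).
Proof.
move/chainP=> h; apply/chainP=> x y; rewrite !inE.
case: x => [i|[]]; case: y => [j|[]] //= iC jC; try exact: h.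
all: by rewrite ?leb_bot ?leb_top ?orbT.
Qed.

Lemma Cun_chain D : is_chain leb D -> is_chain le (Cun D).
Proof.
move/chainP=> h; apply/chainP=> i j; rewrite !inE => iD jD; exact: (h _ _ iD jD).
Qed.

Lemma Cbar_max C : is_maximal_chain le C -> is_maximal_chain leb (Cbar C).
Proof.
case/andP=> hc /forallP hm; rewrite /is_maximal_chain Cbar_chain //=.
apply/forallP=> D; apply/implyP=> /andP [hD sub].
have : Cun D == C.
  move/implyP: (hm (Cun D)); rewrite eq_sym; apply; rewrite Cun_chain //=.
  apply/subsetP=> i iC; rewrite inE; apply: (subsetP sub); by rewrite inE.
move/eqP=> E; rewrite eqEsubset sub andbT; apply/subsetP=> x xD.
rewrite inE; case: x xD => // i iD; by rewrite -E inE.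
Qed.

Lemma Cun_max D : is_maximal_chain leb D -> is_maximal_chain le (Cun D) /\ D = Cbar (Cun D).
Proof.
move=> hDm; have [hD hm] := andP hDm.
have rr := leb_refl hpo.
have bD : inr false \in D by apply: (maxchain_in rr hDm) => y _; rewrite leb_bot.
have tD : inr true \in D by apply: (maxchain_in rr hDm) => y _; rewrite leb_top orbT.
have ED : D = Cbar (Cun D).
  apply/setP=> x; rewrite !inE; case: x => [i|[]] //=; by rewrite inE.
split=> //; rewrite /is_maximal_chain Cun_chain //=.
apply/forallP=> E; apply/implyP=> /andP [hE sub].
move/forallP: hm => /(_ (Cbar E)) /implyP.
rewrite Cbar_chain //= => H.
have : Cbar E == D.
  apply: H; rewrite {1}ED; apply/subsetP=> x; rewrite !inE; case: x => //= i iD.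
  exact: (subsetP sub).
by move/eqP <-; rewrite CunK.
Qed.

Lemma minlen_bar : min_maxchain_len leb = (min_maxchain_len le + 2)%R.
Proof.
rewrite /min_maxchain_len.
case: (ex_maxchain le) => C0 hC0.
have cardle : forall (T : finType) (D : {set T}), #|D| <= #|T| by move=> T D; exact: max_card.
case: (@bigmin_attained _ (fun D => #|D|) _ #|'I_N| _ hC0 (fun D _ => cardle _ D)) => C hC eC.
case: (@bigmin_attained _ (fun D => #|D|) _ #|Pbar N| _ (Cbar_max hC0) (fun D _ => cardle _ D)) => D hD eD.
rewrite eC eD.
have [hD' ED] := Cun_max hD.
have e1 : #|D| <= #|C| + 2.
  rewrite -card_Cbar -eD; exact: (bigmin_le (fun D => #|D|) #|Pbar N| (Cbar_max hC)).
have e2 : #|C| <= #|Cun D|.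
  rewrite -eC; exact: (bigmin_le (fun D => #|D|) #|'I_N| hD').
have e3 : #|D| = #|Cun D| + 2 by rewrite {1}ED card_Cbar.
have -> : #|D| = (#|C| + 2)%N by lia.
rewrite PoszD; lia.
Qed.
End Corr.


Section Alg.
Variables (k : fieldType) (N : nat) (le : rel 'I_N).
Hypothesis hpo : is_partial_order le.
Local Notation leb := (le_bar le).
Local Notation poly := (polyR k N).
Local Notation R := (hibi_ring (k:=k) le).
Local Notation mon := ('X_{1..N.+1}).

Definition Bm (m : mon) (x : Pbar N) : nat :=
  match x with inl i => m (lift ord0 i) | inr false => m ord0 | inr true => 0 end.

Definition anti (m : mon) := forall x y, leb x y -> Bm m y <= Bm m x.

Definition mk (B : Pbar N -> nat) : mon :=
  [multinom (if unlift ord0 i is Some j then B (inl j) else B (inr false)) | i < N.+1].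

Lemma Bm_mk B : B (inr true) = 0 -> Bm (mk B) =1 B.
Proof.
move=> Bt [i|[]] //=; rewrite mnmE ?liftK //.
by rewrite unlift_none.
Qed.

Lemma Bm_eq m1 m2 : Bm m1 =1 Bm m2 -> m1 = m2.
Proof.
move=> H; apply/mnmP=> i; case: (unliftP ord0 i) => [j ->|->].
  exact: (H (inl j)).
exact: (H (inr false)).
Qed.

Lemma BmD m1 m2 x : Bm (m1 + m2)%MM x = Bm m1 x + Bm m2 x.
Proof. by case: x => [i|[]] //=; rewrite mnmDE. Qed.

Lemma BmB m1 m2 x : Bm (m1 - m2)%MM x = Bm m1 x - Bm m2 x.
Proof. by case: x => [i|[]] //=; rewrite mnmBE. Qed.

Lemma BmM m q x : Bm (m *+ q)%MM x = Bm m x * q.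
Proof. by case: x => [i|[]] //=; rewrite mulmnE. Qed.

Lemma Bm_lep m1 m2 : (m1 <= m2)%MM = [forall x, Bm m1 x <= Bm m2 x].
Proof.
apply/mnm_lepP/forallP => [H [i|[]]|H i] //=.
case: (unliftP ord0 i) => [j ->|->]; [exact: (H (inl j)) | exact: (H (inr false))].
Qed.

Definition gfun (I : {set 'I_N}) (x : Pbar N) : nat :=
  match x with inl i => i \in I | inr false => 1 | inr true => 0 end.

Local Open Scope ring_scope.
Lemma gen_eq (I : {set 'I_N}) :
  varT k N * \prod_(i in I) varX k i = 'X_[mk (gfun I)].
Proof.
rewrite /varT /varX -(big_morph (@mpolyX _ k) (@mpolyXD _ k) (@mpolyX0 _ k)) -mpolyXD.
congr mpolyX; apply: Bm_eq => x; rewrite Bm_mk // BmD.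
have sumE : forall j, Bm (\big[mnm_add/0%MM]_(i in I) U_(lift ord0 i))%MM j
              = \sum_(i in I) Bm U_(lift ord0 i)%MM j.
  move=> j; case: j => [j|[]] /=; rewrite ?mnm_sumE //; by rewrite big1.
rewrite sumE; case: x => [j|[]] /=.
- rewrite mnm1E (negbTE (neq_lift _ _)) add0n.
  under eq_bigr => i _ do rewrite mnm1E (inj_eq (@lift_inj _ ord0)).
  case: (boolP (j \in I)) => jI.
    rewrite (bigD1 j) //= eqxx big1 // => i /andP [_ /negPf ->] //.
  rewrite big1 // => i iI; apply/eqP; rewrite eqb0; apply/eqP=> E; subst i; by rewrite iI in jI.
- by rewrite big1.
- rewrite mnm1E eqxx big1 // => i _; by rewrite mnm1E eq_sym (negbTE (neq_lift _ _)).
Qed.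

Lemma R_C c : R c%:MP. Proof. exact: kalg_const. Qed.
Lemma R_1 : R 1. Proof. by rewrite -mpolyC1; exact: R_C. Qed.
Lemma R_0 : R 0. Proof. by rewrite -mpolyC0; exact: R_C. Qed.

Lemma gfun_anti I : poset_ideal le I -> anti (mk (gfun I)).
Proof.
move=> hI x y; rewrite !Bm_mk //.
case: x => [i|[]]; case: y => [j|[]] //=.
- move=> lij; by case: (boolP (j \in I)) => // /(hI _ _ lij) ->.
all: by case: (_ \in I).
Qed.

Lemma anti0 : anti 0%MM.
Proof. by move=> x y _; case: y => [j|[]] //=; rewrite mnm0E. Qed.

Lemma antiD m1 m2 : anti m1 -> anti m2 -> anti (m1 + m2)%MM.
Proof. move=> h1 h2 x y xy; rewrite !BmD; exact: leq_add (h1 _ _ xy) (h2 _ _ xy). Qed.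

Lemma supp_R f : R f -> forall m, m \in msupp f -> anti m /\ R 'X_[m].
Proof.
elim=> [c|g [I [hI ->]]|x y _ IHx _ IHy|x y _ IHx _ IHy] m.
- rewrite msuppC; case: (c == 0) => //; rewrite inE => /eqP ->.
  by split; [exact: anti0 | rewrite mpolyX0; exact: R_1].
- rewrite gen_eq msuppX inE => /eqP ->; split; first exact: gfun_anti.
  rewrite -gen_eq; apply: kalg_gen; by exists I.
- by move/msuppD_le; rewrite mem_cat => /orP [/IHx|/IHy].
- move/msuppM_le => /allpairsP [[m1 m2] /= [h1 h2 ->]].
  have [a1 r1] := IHx _ h1; have [a2 r2] := IHy _ h2.
  split; first exact: antiD.
  rewrite mpolyXD; exact: kalg_mul.
Qed.

Lemma anti_R m : anti m -> R 'X_[m].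
Proof.
move: {2}(Bm m (inr false)) (erefl (Bm m (inr false))) => a.
elim: a m => [|a IH] m ea hm.
  have -> : m = 0%MM.
    apply: Bm_eq => x; have : (Bm m x <= 0)%N by rewrite -ea; apply: hm; exact: leb_bot.
    rewrite leqn0 => /eqP ->; by case: x => [?|[]] //=; rewrite mnm0E.
  by rewrite mpolyX0; exact: R_1.
pose I := [set i | 0 < m (lift ord0 i)]%N.
have hI : poset_ideal le I.
  move=> i j lij; rewrite !inE => h; exact: leq_trans h (hm (inl i) (inl j) lij).
have gB : forall x, Bm (mk (gfun I)) x = (0 < Bm m x)%N.
  move=> x; rewrite Bm_mk //; case: x => [i|[]] //=; [by rewrite /I inE | by move: ea => /= ->].
have Em : m = (mk (gfun I) + (m - mk (gfun I)))%MM.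
  apply: Bm_eq => x; rewrite BmD BmB gB; case: (Bm m x) => //= n; by rewrite add1n subn1.
rewrite Em mpolyXD; apply: kalg_mul.
  rewrite -gen_eq; apply: kalg_gen; by exists I.
apply: IH.
  by rewrite BmB gB ea /= subn1.
move=> x y xy; rewrite !BmB !gB; have := hm _ _ xy; lia.
Qed.

Definition Qd (n : nat) (f : poly) := forall m, m \in msupp f -> (n <= m ord0)%N.

Lemma ideal_gen_Q n (G : poly -> Prop) :
  (forall g, G g -> R g /\ Qd n g) -> forall f, ideal_gen R G f -> R f /\ Qd n f.
Proof.
move=> hG f; elim=> [|g /hG //|x y _ [Rx Qx] _ [Ry Qy]|r x Rr _ [Rx Qx]].
- by split; [exact: R_0 | move=> m; rewrite msupp0].
- split; first exact: kalg_add.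
  by move=> m /msuppD_le; rewrite mem_cat => /orP [/Qx|/Qy].
- split; first exact: kalg_mul.
  move=> m /msuppM_le => /allpairsP [[m1 m2] /= [h1 h2 ->]].
  rewrite mnmDE; exact: leq_trans (Qx _ h2) (leq_addl _ _).
Qed.

Lemma max_Q f : hibi_max le f -> R f /\ Qd 1 f.
Proof.
apply: ideal_gen_Q => g hg; split; first exact: kalg_gen.
case: hg => I [_ ->]; rewrite gen_eq => m; rewrite msuppX inE => /eqP ->.
by rewrite mnmE unlift_none.
Qed.

Lemma pow_Q n f : ideal_pow R (hibi_max le) n f -> R f /\ Qd n f.
Proof.
elim: n f => [|n IH] f /=; first by move=> Rf; split=> // m.
apply: ideal_gen_Q => z [a [b [/IH [Ra Qa] [/max_Q [Rb Qb] ->]]]].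
split; first exact: kalg_mul.
move=> m /msuppM_le => /allpairsP [[m1 m2] /= [h1 h2 ->]].
rewrite mnmDE; have := Qa _ h1; have := Qb _ h2; lia.
Qed.
End Alg.


Section Core.
Variables (k : fieldType) (N : nat) (le : rel 'I_N).
Hypothesis hpo : is_partial_order le.
Local Notation leb := (le_bar le).
Local Notation poly := (polyR k N).
Local Notation R := (hibi_ring (k:=k) le).
Local Notation mon := ('X_{1..N.+1}).

Definition cnt (x : Pbar N) := #|[set y | leb x y && (y != inr true)]|.

Lemma cnt_top : cnt (inr true) = 0.
Proof. apply/eqP; rewrite cards_eq0; apply/eqP/setP=> y; rewrite !inE; by case: y => [?|[]]. Qed.

Lemma cnt_le x y : leb x y -> cnt y <= cnt x.
Proof.
move=> xy; apply: subset_leq_card; apply/subsetP=> z; rewrite !inE => /andP [yz ->].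
by rewrite (leb_trans hpo xy yz).
Qed.

Lemma cnt_lt x y : leb x y -> x != y -> cnt y < cnt x.
Proof.
move=> xy nxy; apply: proper_card; apply/properP; split.
  apply/subsetP=> z; rewrite !inE => /andP [yz ->]; by rewrite (leb_trans hpo xy yz).
exists x; rewrite !inE ?leb_refl //=.
  apply/eqP=> E; subst x; move/negP: nxy; apply; apply/eqP; apply: (leb_anti hpo).
  by rewrite xy leb_top.
apply/negP=> /andP [yx _]; move/negP: nxy; apply; apply/eqP; apply: (leb_anti hpo).
by rewrite xy yx.
Qed.

Local Open Scope ring_scope.
Variables (phi : poly -> poly) (q : nat).
Hypotheses (hR : forall x, R x -> R (phi x))
  (hM : forall r x, R r -> R x -> phi (r ^+ q * x) = r * phi x).

Lemma core (u : mon) c c' : anti le u -> coverP leb c c' ->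
  (Bm u c' + q <= Bm u c)%N -> (phi 'X_[u])@_0 = 0.
Proof.
move=> hu [cc' ncc' hcov] hq.
pose E x := (x == c) || [exists z, [&& leb c z, z != c, leb z x & ~~ leb c' z]].
have Ec : E c by rewrite /E eqxx.
have KE : forall x y, E x -> ~~ E y -> leb x y -> x = c /\ leb c' y.
  move=> x y Ex Ey xy.
  have xc : x = c.
    case/orP: Ex => [/eqP //|/existsP [z /and4P [cz nzc zx nc'z]]].
    move/negP: Ey; case; apply/orP; right; apply/existsP; exists z.
    by rewrite cz nzc (leb_trans hpo zx xy) nc'z.
  split=> //; subst x; apply/negPn/negP => nc'y.
  have nyc : y != c by apply: contraNneq Ey => ->.
  move/negP: Ey; case; apply/orP; right; apply/existsP; exists y.
  by rewrite xy nc'y nyc leb_refl.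
have Ec' : ~~ E c'.
  rewrite /E negb_or eq_sym ncc' /=; apply/negP=> /existsP [z /and4P [cz nzc zc' nc'z]].
  case: (hcov z cz zc') => E'; [by rewrite E' eqxx in nzc | by rewrite E' leb_refl in nc'z].
pose eb x := (E x : nat).
have hEtop : forall x, E x -> ~~ E (inr true) -> (q <= Bm u x)%N.
  move=> x Ex Et; have [-> c'top] := KE _ _ Ex Et (leb_top le x).
  have := hu _ _ c'top; rewrite /= in hq *; lia.
have key : forall g h v : mon, anti le g -> anti le h -> anti le v ->
   (u + g *+ q = v + h *+ q)%MM -> 'X_[g] * phi 'X_[u] = 'X_[h] * phi 'X_[v].
  move=> g h v ag ah av e.
  rewrite -(hM (anti_R k ag) (anti_R k hu)) -(hM (anti_R k ah) (anti_R k av)).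
  rewrite !mpolyXn -!mpolyXD; congr (phi (mpolyX _ _)).
  exact: (etrans (addmC _ _) (etrans e (addmC _ _))).
have fin : forall g h (P Q : poly), 'X_[g] * P = 'X_[h] * Q -> (Q * 'X_[h])@_g = 0 -> P@_0 = 0.
  move=> g h P Q e z; rewrite -(mcoeffMX P g 0) addm0 mulrC e mulrC; exact: z.
have antiB : forall B : Pbar N -> nat, B (inr true) = 0%N ->
    (forall x y, leb x y -> (B y <= B x)%N) -> anti le (mk B).
  by move=> B Bt hB x y xy; rewrite !Bm_mk //; exact: hB.
have cntS : forall x y, leb x y -> x = y \/ (cnt y < cnt x)%N.
  move=> x y xy; case: (eqVneq x y) => [->|nxy]; [by left | right; exact: cnt_lt].
have Bu0 : Bm u (inr true) = 0%N by [].
have hu' := hu.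
case: (boolP (E (inr true))) => Et.
- pose Bg x := (2 * cnt x + (1 - eb x))%N.
  pose Bh x := (2 * cnt x)%N.
  pose Bv x := (Bm u x + q * (1 - eb x))%N.
  have Bg0 : Bg (inr true) = 0%N by rewrite /Bg cnt_top /eb Et.
  have Bh0 : Bh (inr true) = 0%N by rewrite /Bh cnt_top.
  have Bv0 : Bv (inr true) = 0%N by rewrite /Bv /eb Et muln0.
  have ag : anti le (mk Bg).
    apply: antiB => // x y xy; rewrite /Bg; case: (cntS _ _ xy) => [->//|].
    case: (E x); case: (E y); rewrite /eb /=; lia.
  have ah : anti le (mk Bh).
    apply: antiB => // x y xy; rewrite /Bh; have := cnt_le xy; lia.
  have av : anti le (mk Bv).
    apply: antiB => // x y xy; rewrite /Bv /eb.
    have := hu _ _ xy.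
    case: (boolP (E x)) => Ex; case: (boolP (E y)) => Ey /=; try lia.
    have [xc c'y] := KE _ _ Ex Ey xy; subst x; have := hu _ _ c'y; lia.
  have e : (u + mk Bg *+ q = mk Bv + mk Bh *+ q)%MM.
    apply: Bm_eq => x; rewrite !BmD !BmM !Bm_mk //; rewrite /Bv /Bg /Bh; lia.
  have := key _ _ _ ag ah av e.
  move/fin; apply.
  pose m' := mk (fun x => 1 - eb x)%N.
  have m'0 : (fun x => 1 - eb x)%N (inr true) = 0%N by rewrite /eb Et.
  have -> : mk Bg = (mk Bh + m')%MM.
    apply: Bm_eq => x; rewrite BmD !Bm_mk //.
  rewrite mcoeffMX; apply/eqP; rewrite mcoeff_eq0; apply/negP => /(supp_R (hR (anti_R k av))) [am _].
  have := am _ _ cc'; rewrite !Bm_mk // /eb (negbTE Ec') Ec; done.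
- pose Bg x := (2 * cnt x)%N.
  pose Bh x := (2 * cnt x + eb x)%N.
  pose Bv x := (Bm u x - q * eb x)%N.
  have Bg0 : Bg (inr true) = 0%N by rewrite /Bg cnt_top.
  have Bh0 : Bh (inr true) = 0%N by rewrite /Bh cnt_top /eb (negbTE Et).
  have Bv0 : Bv (inr true) = 0%N by rewrite /Bv /eb (negbTE Et).
  have ag : anti le (mk Bg).
    apply: antiB => // x y xy; rewrite /Bg; have := cnt_le xy; lia.
  have ah : anti le (mk Bh).
    apply: antiB => // x y xy; rewrite /Bh; case: (cntS _ _ xy) => [->//|].
    case: (E x); case: (E y); rewrite /eb /=; lia.
  have av : anti le (mk Bv).
    apply: antiB => // x y xy; rewrite /Bv /eb.
    have := hu _ _ xy.
    case: (boolP (E x)) => Ex; case: (boolP (E y)) => Ey /=; try lia.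
    have [xc c'y] := KE _ _ Ex Ey xy; subst x; have := hu _ _ c'y; lia.
  have e : (u + mk Bg *+ q = mk Bv + mk Bh *+ q)%MM.
    apply: Bm_eq => x; rewrite !BmD !BmM !Bm_mk //; rewrite /Bv /Bg /Bh /eb.
    case: (boolP (E x)) => Ex /=; last lia.
    have := hEtop _ Ex Et; lia.
  have := key _ _ _ ag ah av e.
  move/fin; apply.
  apply/eqP; rewrite mcoeff_eq0 (perm_mem (msuppMX _ _)); apply/negP => /mapP [m' _ E'].
  have := congr1 (fun m => Bm m c) E'; rewrite BmD !Bm_mk // /Bg /Bh /eb Ec /=; lia.
Qed.
End Core.


Section Main.
Variables (k : fieldType) (N : nat) (le : rel 'I_N).
Hypothesis hpo : is_partial_order le.
Local Notation leb := (le_bar le).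
Local Notation poly := (polyR k N).
Local Notation R := (hibi_ring (k:=k) le).
Local Open Scope ring_scope.

Lemma phi_sum (phi : poly -> poly) (I : eqType) (s : seq I) (F : I -> poly) :
  (forall x y, R x -> R y -> phi (x + y) = phi x + phi y) ->
  (forall i, i \in s -> R (F i)) ->
  phi (\sum_(i <- s) F i) = \sum_(i <- s) phi (F i).
Proof.
move=> hA hF.
have phi0 : phi 0 = 0.
  have := hA 0 0 (@R_0 k N le) (@R_0 k N le); rewrite addr0 => h.
  by apply: (@addrI _ (phi 0)); rewrite addr0 -h.
elim: s hF => [|a s IH] hF; first by rewrite !big_nil.
have hF' : forall i, i \in s -> R (F i) by move=> i iS; apply: hF; rewrite inE iS orbT.
have RS : R (\sum_(i <- s) F i).
  elim: (s) hF' => [|b s' IH'] hF2; first by rewrite big_nil; exact: (@R_0 k N le).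
  rewrite big_cons; apply: kalg_add; first by apply: hF2; rewrite inE eqxx.
  by apply: IH' => i iS; apply: hF2; rewrite inE iS orbT.
by rewrite !big_cons hA ?IH //; apply: hF; rewrite inE eqxx.
Qed.

Lemma main_bound (C : {set Pbar N}) (q n : nat) (d : poly) :
  is_maximal_chain leb C ->
  (forall c : k, exists y : k, y ^+ q = c) ->
  ideal_pow R (hibi_max le) n d -> splits_at R q d ->
  (n <= (#|C|).-1 * q.-1)%N.
Proof.
move=> hC roots hd [phi [hR hA hM hS]].
have [Rd Qd] := pow_Q hd.
rewrite leqNgt; apply/negP => big.
have phid : phi d = 1 by have := hS 1 (@R_1 k N le); rewrite expr1n mul1r.
have c0 : forall m, m \in msupp d -> (phi 'X_[m])@_0 = 0.
  move=> m md; have [am _] := supp_R Rd md.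
  case: (eqVneq ((phi 'X_[m])@_0) 0) => // nz; exfalso.
  have : (Bm m (inr false) <= (#|C|).-1 * q.-1)%N.
    apply: (maxchain_bot_bound (leb_refl hpo) (leb_trans hpo) (leb_anti hpo) (leb_bot le) (leb_top le) hC) => //.
    move=> x s _ _ cov; rewrite ltnNge; apply/negP => hq.
    by rewrite (core hpo hR hM am cov hq) eqxx in nz.
  rewrite /Bm /= => h; have := Qd _ md => h2; have := leq_trans big (leq_trans h2 h); by rewrite ltnn.
have : (phi d)@_0 = 0.
  rewrite {1}(mpolyE d) (phi_sum hA); last first.
    move=> m md; rewrite -mul_mpolyC; apply: kalg_mul; first exact: R_C.
    by have [_ Rm] := supp_R Rd md.
  rewrite raddf_sum big_seq big1 // => m md.
  have [y <-] := roots (d@_m).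
  rewrite -mul_mpolyC rmorphXn /= hM ?R_C //.
  - by rewrite mcoeffCM c0 // mulr0.
  - exact: kalg_const.
  - by have [_ Rm] := supp_R Rd md.
move=> h; move: phid => /(congr1 (mcoeff 0)); rewrite h mcoeff1 eqxx => /eqP.
by rewrite eq_sym oner_eq0.
Qed.
End Main.

From mathcomp Require Import classical_sets reals ereal.
Import Order.TTheory GRing.Theory Num.Theory.
Local Open Scope ring_scope.

Lemma perfect_roots (k : fieldType) (p : nat) : perfect_field k p ->
  forall e (c : k), exists y : k, y ^+ (p ^ e) = c.
Proof.
move=> hp; elim=> [|e IH] c; first by exists c; rewrite expn0 expr1.
have [y <-] := hp c; have [z <-] := IH y; exists z.
by rewrite -exprM expnSr.
Qed.

Theorem corollary3p8 (k : fieldType) (p : nat) (N : nat) (le : rel 'I_N)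
  (rT : realType) :
  p \in [pchar k] -> perfect_field k p -> is_partial_order le ->
  (fpt (hibi_ring (k:=k) le) (hibi_max (k:=k) le) p rT
     <= ((min_maxchain_len (le_bar le))%:~R : rT)%:E)%E /\
  min_maxchain_len (le_bar le) = (min_maxchain_len le + 2)%R.
Proof.
move=> hch hperf hpo; split; last exact: minlen_bar.
have p1 : (1 < p)%N by apply: prime_gt1; exact: (pcharf_prime hch).
case: (ex_maxchain (le_bar le)) => C0 hC0.
have cardle : forall (T : finType) (D : {set T}), (#|D| <= #|T|)%N by move=> T D; exact: max_card.
case: (@bigmin_attained _ (fun D => #|D|) _ #|Pbar N| _ hC0 (fun D _ => cardle _ D)) => C hC eC.
rewrite /min_maxchain_len eC.
have C1 : (0 < #|C|)%N.
  apply/card_gt0P; exists (inr false); apply: (maxchain_in (leb_refl hpo) hC) => y _.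
  by rewrite leb_bot.
rewrite /fpt; apply: ge_ereal_sup => _ [t [t0 [e0 He]] <-].
rewrite lee_fin.
have [d [hd hs]] := He e0.+1 (leqnSn _).
set q := (p ^ e0.+1)%N in hd hs.
have q2 : (1 < q)%N.
  rewrite /q expnS; have : (0 < p ^ e0)%N by rewrite expn_gt0; lia.
  move=> h; apply: leq_trans p1 _; rewrite leq_pmulr //.
have hn := main_bound hpo hC (@perfect_roots k p hperf e0.+1) hd hs.
set x := t * (q%:R - 1) in hn.
have x0 : 0 <= x by rewrite mulr_ge0 // subr_ge0 ler1n; lia.
have cx : 0 <= Num.ceil x by rewrite ceil_ge0 (lt_le_trans _ x0) // ltrN10.
have h1 : x <= ((#|C|).-1 * q.-1)%:R.
  apply: (le_trans (ceil_ge x)).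
  rewrite -(ger0_norm cx) -natr_absz ler_nat; exact: hn.
have qpos : 0 < (q%:R - 1 : rT) by rewrite subr_gt0 ltr1n.
rewrite -(ler_pM2r qpos) -/x (le_trans h1) //.
case: (#|C|) C1 => // c _.
have -> : ((c.+1)%:Z - 1 = c%:Z)%R by lia.
rewrite /= natrM.
have -> : (q.-1)%:R = (q%:R - 1 : rT).
  case: (q) q2 => // q' _; by rewrite /= -natr1 addrK.
by [].
Qed.
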